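(* Let $f$ be a discretely conic function on a discrete set $\mathrm{dom}(f)\subseteq\mathbb{R}^n$ such that for every $\alpha\in\mathbb{R}$ the set $\{x\in\mathrm{dom}(f): f(x)\le\alpha\}$ is finite. Then there exists a conic function $g$ with $\mathrm{dom}(g)=\mathrm{conv}(\mathrm{dom}(f))$ and $g(x)=f(x)$ for all $x\in\mathrm{dom}(f)$ if and only if for every $i\ge 2$ (for which $\mathrm{MIN}_i(f)$ is defined) $$\mathrm{MIN}_i(f)\subseteq \mathrm{relbd}(P_i),\qquad P_i=\mathrm{conv}(\mathrm{MIN}_1(f)\cup\dots\cup\mathrm{MIN}_i(f)).$$ Equivalently: for all $z\in\mathrm{dom}(f)\setminus\mathrm{MIN}_1(f)$, $\{x\in\mathrm{dom}(f): f(x)=f(z)\}\subseteq\mathrm{relbd}(\mathrm{conv}\{x\in\mathrm{dom}(f): f(x)\le f(z)\})$.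
   Context: A set $D\subseteq\mathbb{R}^n$ is discrete if every $x\in D$ has a ball around it meeting $D$ only in $x$. For points $x^{(1)},\dots,x^{(k)}$, $\mathrm{cone}(x^{(1)},\dots,x^{(k-1)}\mid x^{(k)}) := x^{(k)}+\{\sum_{i<k}\lambda_i (x^{(k)}-x^{(i)}) : \lambda_i\ge 0\}$. A function $f$ with discrete domain is discretely conic if for all $y,x^{(1)},\dots,x^{(k)}\in\mathrm{dom}(f)$ with $f(x^{(1)})\le\dots\le f(x^{(k)})$ and $y\in\mathrm{cone}(x^{(1)},\dots,x^{(k-1)}\mid x^{(k)})$ we have $f(y)\ge f(x^{(k)})$. A function $g$ on a convex set is conic if for all $y,z\in\mathrm{dom}(g)$, $t\ge0$ with $g(y)\le g(z)$ and $z+t(z-y)\in\mathrm{dom}(g)$, $g(z+t(z-y))\ge g(z)$. Under the finiteness hypothesis, the distinct values of $f$ form an increasing sequence $v_1<v_2<\cdots$, and $\mathrm{MIN}_i(f)=\{x: f(x)=v_i\}$. $\mathrm{relbd}(S)$ is the boundary of $S$ relative to its affine hull. *)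

(* Defs.v *)
From Stdlib Require Import Reals List Sorted.
From Stdlib Require Vectors.Fin.
Import ListNotations.
Open Scope R_scope.

Definition vec (n : nat) := Fin.t n -> R.

Definition vzero {n} : vec n := fun _ => 0.
Definition vadd {n} (x y : vec n) : vec n := fun i => x i + y i.
Definition vsub {n} (x y : vec n) : vec n := fun i => x i - y i.
Definition vscale {n} (t : R) (x : vec n) : vec n := fun i => t * x i.

Definition lincomb {n} (ps : list (vec n * R)) : vec n :=
  fold_right (fun pl acc => vadd (vscale (snd pl) (fst pl)) acc) vzero ps.
Definition wsum {n} (ps : list (vec n * R)) : R :=
  fold_right (fun pl s => snd pl + s) 0 ps.

(* open ball for the max-norm (induces the standard topology on R^n) *)
Definition ball {n} (x : vec n) (eps : R) (y : vec n) : Prop :=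
  forall i, Rabs (y i - x i) < eps.

Definition discrete {n} (D : vec n -> Prop) : Prop :=
  forall x, D x -> exists eps, 0 < eps /\ forall y, D y -> ball x eps y -> y = x.

Definition conv {n} (S : vec n -> Prop) (x : vec n) : Prop :=
  exists ps, Forall (fun pl => S (fst pl) /\ 0 <= snd pl) ps /\ wsum ps = 1 /\ x = lincomb ps.
Definition aff {n} (S : vec n -> Prop) (x : vec n) : Prop :=
  exists ps, Forall (fun pl => S (fst pl)) ps /\ wsum ps = 1 /\ x = lincomb ps.

Definition relbd {n} (S : vec n -> Prop) (x : vec n) : Prop :=
  aff S x /\
  forall eps, 0 < eps ->
    (exists y, S y /\ ball x eps y) /\ (exists y, aff S y /\ ~ S y /\ ball x eps y).

(* discretely conic: the list ps = [(x1,l1);...;(x_{k-1},l_{k-1})], xk = x^(k),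
   y = xk + sum_i l_i (xk - x_i) *)
Definition discretely_conic {n} (D : vec n -> Prop) (f : vec n -> R) : Prop :=
  forall (ps : list (vec n * R)) (xk y : vec n),
    D y -> D xk ->
    Forall (fun pl => D (fst pl) /\ 0 <= snd pl) ps ->
    Sorted (fun a b => f a <= f b) (map fst ps ++ [xk]) ->
    y = vadd xk (lincomb (map (fun pl => (vsub xk (fst pl), snd pl)) ps)) ->
    f xk <= f y.

Definition conic {n} (C : vec n -> Prop) (g : vec n -> R) : Prop :=
  forall (y z : vec n) (t : R),
    C y -> C z -> 0 <= t -> g y <= g z ->
    C (vadd z (vscale t (vsub z y))) ->
    g z <= g (vadd z (vscale t (vsub z y))).

Definition finite_sublevels {n} (D : vec n -> Prop) (f : vec n -> R) : Prop :=
  forall alpha : R, exists l : list (vec n), forall x, D x -> f x <= alpha -> In x l.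

(* MINU D f i = MIN_1(f) u ... u MIN_i(f)  (MINU 0 = empty):
   MIN_{i+1} is the set of minimizers of f on D minus MIN_1 u ... u MIN_i. *)
Fixpoint MINU {n} (D : vec n -> Prop) (f : vec n -> R) (i : nat) (x : vec n) : Prop :=
  match i with
  | O => False
  | S j => MINU D f j x \/
           (D x /\ ~ MINU D f j x /\ forall y, D y -> ~ MINU D f j y -> f x <= f y)
  end.

Definition MIN {n} (D : vec n -> Prop) (f : vec n -> R) (i : nat) (x : vec n) : Prop :=
  MINU D f i x /\ ~ MINU D f (pred i) x.

(* Main.v *)
Require Import Defs.
From Stdlib Require Import Reals List Sorted Lra Lia Permutation Classical FunctionalExtensionality ClassicalEpsilon.
Import ListNotations.
Open Scope R_scope.

Lemma vext {n} (x y : vec n) : (forall i, x i = y i) -> x = y.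
Proof. intros H; apply functional_extensionality; exact H. Qed.

Lemma lincomb_nil_pt {n} (i : Fin.t n) : @lincomb n [] i = 0.
Proof. reflexivity. Qed.
Lemma lincomb_cons_pt {n} (p : vec n) l ps i :
  lincomb ((p, l) :: ps) i = l * p i + lincomb ps i.
Proof. reflexivity. Qed.
Lemma wsum_cons {n} (p : vec n) l ps : wsum ((p, l) :: ps) = l + wsum ps.
Proof. reflexivity. Qed.

Lemma lincomb_app_pt {n} (a b : list (vec n * R)) i :
  lincomb (a ++ b) i = lincomb a i + lincomb b i.
Proof. induction a as [|[p l] a IH]; simpl. unfold vzero; lra.
  unfold vadd, vscale in *; simpl in *. rewrite IH. lra. Qed.
Lemma wsum_app {n} (a b : list (vec n * R)) : wsum (a ++ b) = wsum a + wsum b.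
Proof. induction a as [|[p l] a IH]; simpl. lra. rewrite IH; lra. Qed.

Definition scl {n} (c : R) (ps : list (vec n * R)) :=
  map (fun pl => (fst pl, c * snd pl)) ps.
Lemma lincomb_scl_pt {n} c (ps : list (vec n * R)) i :
  lincomb (scl c ps) i = c * lincomb ps i.
Proof. induction ps as [|[p l] ps IH]; simpl. unfold vzero; lra.
  unfold vadd, vscale in *; simpl in *. rewrite IH. lra. Qed.
Lemma wsum_scl {n} c (ps : list (vec n * R)) : wsum (scl c ps) = c * wsum ps.
Proof. induction ps as [|[p l] ps IH]; simpl. lra. rewrite IH; lra. Qed.
Lemma Forall_scl {n} (S : vec n -> Prop) c ps : 0 <= c ->
  Forall (fun pl => S (fst pl) /\ 0 <= snd pl) ps ->
  Forall (fun pl => S (fst pl) /\ 0 <= snd pl) (scl c ps).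
Proof. intros Hc H; induction H as [|[p l] ps [H1 H2] _ IH]; simpl; constructor; auto.
  simpl; split; auto. apply Rmult_le_pos; auto. Qed.

Lemma lincomb_perm_pt {n} (a b : list (vec n * R)) i :
  Permutation a b -> lincomb a i = lincomb b i.
Proof. intros H; induction H; simpl; unfold vadd, vscale in *; try lra.
  all: try (destruct x as [p l]; simpl; lra). all: destruct x as [p l], y as [q m]; simpl; lra. Qed.
Lemma wsum_perm {n} (a b : list (vec n * R)) : Permutation a b -> wsum a = wsum b.
Proof. intros H; induction H; simpl; lra. Qed.

Lemma wsum_nonneg {n} (S : vec n -> Prop) ps :
  Forall (fun pl => S (fst pl) /\ 0 <= snd pl) ps -> 0 <= wsum ps.
Proof. intros H; induction H as [|[p l] ps [H1 H2] _ IH]; simpl in *; lra. Qed.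

Lemma wsum0_lincomb0 {n} (S : vec n -> Prop) ps :
  Forall (fun pl => S (fst pl) /\ 0 <= snd pl) ps -> wsum ps = 0 -> forall i, lincomb ps i = 0.
Proof. intros H; induction H as [|[p l] ps [H1 H2] Hr IH]; simpl in *; intros Hw i.
  reflexivity. pose proof (wsum_nonneg _ _ Hr).
  unfold vadd, vscale; simpl. assert (l = 0) by lra. subst. rewrite IH by lra. lra. Qed.

Definition convex {n} (C : vec n -> Prop) : Prop :=
  forall p q l, C p -> C q -> 0 <= l <= 1 -> C (vadd (vscale l p) (vscale (1 - l) q)).

Lemma conv_mono {n} (S S' : vec n -> Prop) x :
  (forall y, S y -> S' y) -> conv S x -> conv S' x.
Proof. intros H [ps [H1 [H2 H3]]]; exists ps; split; auto.
  eapply Forall_impl; [|exact H1]; simpl; intros [p l] [? ?]; auto. Qed.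

Lemma conv_single {n} (S : vec n -> Prop) x : S x -> conv S x.
Proof. intros H; exists [(x,1)]; split. constructor; [simpl; split; [auto|lra]|constructor].
  split. simpl; lra. apply vext; intro i. simpl; unfold vadd, vscale, vzero; simpl; lra. Qed.

Lemma conv_convex {n} (S : vec n -> Prop) : convex (conv S).
Proof. intros p q l [ps [Hp [Wp Ep]]] [qs [Hq [Wq Eq]]] Hl.
  exists (scl l ps ++ scl (1 - l) qs). split. apply Forall_app; split; apply Forall_scl; auto; lra.
  split. rewrite wsum_app, !wsum_scl; rewrite Wp, Wq; lra.
  subst; apply vext; intro i. rewrite lincomb_app_pt, !lincomb_scl_pt. unfold vadd, vscale; lra. Qed.

Lemma conv_in_convex {n} (S C : vec n -> Prop) x :
  convex C -> (forall y, S y -> C y) -> conv S x -> C x.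
Proof. intros HC HS [ps [H1 [H2 H3]]]. subst x.
  remember (length ps) as k eqn:Ek. revert ps Ek H1 H2.
  induction k as [|k IH]; intros ps Ek H1 H2; destruct ps as [|[p l] ps]; simpl in *; try lra; try discriminate.
  inversion H1 as [|? ? [Hp Hl] Hr]; subst. simpl in Hp, Hl.
  pose proof (wsum_nonneg _ _ Hr).
  destruct (Req_dec l 1) as [E|E].
  - subst. replace (vadd (vscale 1 p) (lincomb ps)) with p. apply HS; auto.
    apply vext; intro i. unfold vadd, vscale. rewrite (wsum0_lincomb0 _ _ Hr) by lra. lra.
  - assert (Hq : C (lincomb (scl (/ (1 - l)) ps))).
    { apply (IH _). unfold scl; rewrite length_map; congruence. apply Forall_scl; auto. apply Rlt_le, Rinv_0_lt_compat; lra.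
      rewrite wsum_scl. replace (wsum ps) with (1 - l) by lra. field; lra. }
    replace (vadd (vscale l p) (lincomb ps)) with (vadd (vscale l p) (vscale (1 - l) (lincomb (scl (/ (1 - l)) ps)))).
    apply HC; [apply HS; auto | exact Hq | lra].
    apply vext; intro i. unfold vadd, vscale; rewrite lincomb_scl_pt. field. lra. Qed.


Fixpoint vnorm (n : nat) : (Fin.t n -> R) -> R :=
  match n with
  | O => fun _ => 0
  | S m => fun h => Rmax (Rabs (h Fin.F1)) (vnorm m (fun i => h (Fin.FS i)))
  end.

Lemma vnorm_ge0 n h : 0 <= vnorm n h.
Proof. induction n; simpl. lra. eapply Rle_trans; [apply IHn|apply Rmax_r]. Qed.

Lemma vnorm_ge n h (i : Fin.t n) : Rabs (h i) <= vnorm n h.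
Proof. induction n. inversion i. simpl.
  apply (Fin.caseS' i (fun i => Rabs (h i) <= _)).
  apply Rmax_l. intros j. eapply Rle_trans; [apply (IHn (fun i => h (Fin.FS i)))|apply Rmax_r]. Qed.

Lemma vnorm_le n h K : 0 <= K -> (forall i, Rabs (h i) <= K) -> vnorm n h <= K.
Proof. revert h; induction n; intros h HK H; simpl. lra.
  apply Rmax_lub. apply H. apply IHn; auto. Qed.

Lemma vnorm_lt n h K : 0 < K -> (forall i, Rabs (h i) < K) -> vnorm n h < K.
Proof. revert h; induction n; intros h HK H; simpl. lra.
  apply Rmax_lub_lt. apply H. apply IHn; auto. Qed.

Lemma ball_eq {n} (x y : vec n) : (forall eps, 0 < eps -> ball x eps y) -> x = y.
Proof. intros H; apply vext; intro i. destruct (Req_dec (x i) (y i)) as [E|E]; auto.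
  exfalso. assert (0 < Rabs (y i - x i)) by (apply Rabs_pos_lt; lra).
  specialize (H _ H0 i). lra. Qed.

Lemma list_bound {n} (L : list (vec n)) : exists B, 0 <= B /\ forall q, In q L -> forall i, Rabs (q i) <= B.
Proof. induction L as [|q L [B [HB H]]]. exists 0; split; [lra| intros q []].
  exists (Rmax B (vnorm n q)); split. eapply Rle_trans; [exact HB|apply Rmax_l].
  intros q' [E|E] i. subst. eapply Rle_trans; [apply vnorm_ge|apply Rmax_r].
  eapply Rle_trans; [apply H; auto|apply Rmax_l]. Qed.

Lemma conv_bound {n} (S : vec n -> Prop) B x :
  (forall q, S q -> forall i, Rabs (q i) <= B) -> conv S x -> forall i, Rabs (x i) <= B.
Proof. intros H Hx. apply (conv_in_convex S (fun x => forall i, Rabs (x i) <= B)); auto.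
  intros p q l Hp Hq Hl i. unfold vadd, vscale.
  eapply Rle_trans; [apply Rabs_triang|]. rewrite !Rabs_mult, (Rabs_pos_eq l), (Rabs_pos_eq (1 - l)) by lra.
  specialize (Hp i); specialize (Hq i). nra. Qed.

Definition is_rglb (E : R -> Prop) m := (forall x, E x -> m <= x) /\ (forall m', (forall x, E x -> m' <= x) -> m' <= m).
Lemma rglb_ex (E : R -> Prop) : (exists x, E x) -> (exists b, forall x, E x -> b <= x) -> exists m, is_rglb E m.
Proof. intros [x Hx] [b Hb].
  destruct (completeness (fun y => E (- y))) as [m [H1 H2]].
  - exists (- b). intros y Hy. specialize (Hb _ Hy). lra.
  - exists (- x). rewrite Ropp_involutive; auto.
  - exists (- m). split. intros z Hz. assert (- z <= m). apply H1. rewrite Ropp_involutive; auto. lra.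
    intros m' Hm'. assert (m <= - m'). apply H2. intros y Hy. specialize (Hm' _ Hy). lra. lra. Qed.
Definition rglb (E : R -> Prop) : R := epsilon (inhabits 0) (is_rglb E).
Lemma rglb_spec E : (exists x, E x) -> (exists b, forall x, E x -> b <= x) -> is_rglb E (rglb E).
Proof. intros H1 H2. unfold rglb. apply epsilon_spec. apply rglb_ex; auto. Qed.

Lemma conv_nil {n} (x : vec n) : ~ conv (fun p => In p []) x.
Proof. intros [ps [H1 [H2 _]]]. destruct ps as [|[p l] ps]. simpl in H2; lra.
  inversion H1 as [|? ? [[] _] _]. Qed.

Lemma conv_one {n} (p x : vec n) : conv (fun q => In q [p]) x -> x = p.
Proof. intros [ps [H1 [H2 H3]]]. subst x. apply vext; intro i.
  assert (forall ps, Forall (fun pl => In (fst pl) [p] /\ 0 <= snd pl) ps -> lincomb ps i = wsum ps * p i).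
  { clear. intros ps H; induction H as [|[q l] ps [[E|[]] _] _ IH]; simpl in *. unfold vzero; lra.
    subst. unfold vadd, vscale in *. rewrite IH. lra. }
  rewrite H by auto. rewrite H2; lra. Qed.

Lemma conv_cons_rep {n} (p : vec n) L c (c0 : vec n) :
  conv (fun q => In q L) c0 ->
  conv (fun q => In q (p :: L)) c ->
  exists t c', 0 <= t <= 1 /\ conv (fun q => In q L) c' /\ c = vadd (vscale t p) (vscale (1 - t) c').
Proof. intros Hc0 [ps [H1 [H2 H3]]].
  assert (G : forall ps, Forall (fun pl => In (fst pl) (p :: L) /\ 0 <= snd pl) ps ->
     exists a b c', 0 <= a /\ 0 <= b /\ conv (fun q => In q L) c' /\ wsum ps = a + b /\
        lincomb ps = vadd (vscale a p) (vscale b c')).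
  { clear -Hc0. intros ps H; induction H as [|[q l] ps [Hq Hl] _ [a [b [c' [Ha [Hb [Hc' [Hw He]]]]]]]]; simpl in *.
    - exists 0, 0, c0. repeat split; try lra; auto. apply vext; intro i; unfold vadd, vscale, vzero; lra.
    - destruct Hq as [E|E].
      + subst q. exists (a + l), b, c'. repeat split; try lra; auto. rewrite He.
        apply vext; intro i; unfold vadd, vscale; lra.
      + destruct (Req_dec (b + l) 0) as [Z|Z].
        * exists a, 0, c'. repeat split; try lra; auto. rewrite He.
          apply vext; intro i; unfold vadd, vscale. replace b with 0 by lra. replace l with 0 by lra. lra.
        * exists a, (b + l), (vadd (vscale (b / (b + l)) c') (vscale (1 - b / (b + l)) q)).
          repeat split; try lra; auto.
          apply conv_convex; auto. apply conv_single; auto.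
          split. apply Rmult_le_pos; [lra| apply Rlt_le, Rinv_0_lt_compat; lra]. apply Rmult_le_reg_r with (b + l). lra.
          unfold Rdiv; rewrite Rmult_assoc, Rinv_l by lra. lra.
          rewrite He. apply vext; intro i; unfold vadd, vscale. field. lra. }
  destruct (G _ H1) as [a [b [c' [Ha [Hb [Hc' [Hw He]]]]]]].
  exists a, c'. repeat split; try lra; auto. subst c; rewrite He. replace b with (1 - a) by lra. reflexivity. Qed.


Definition cl_approx {n} (S : vec n -> Prop) (y : vec n) :=
  forall eps, 0 < eps -> exists c, S c /\ ball y eps c.

Lemma conv_list_closed {n} (L : list (vec n)) y :
  cl_approx (conv (fun q => In q L)) y -> conv (fun q => In q L) y.
Proof.
  revert y; induction L as [|p L IH]; intros y H.
  - destruct (H 1 Rlt_0_1) as [c [Hc _]]. exfalso; eapply conv_nil; eauto.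
  - destruct L as [|q L'].
    + assert (y = p). { apply ball_eq. intros eps He. destruct (H eps He) as [c [Hc Hb]].
        apply conv_one in Hc. subst; auto. }
      subst; apply conv_single; simpl; auto.
    + set (L := q :: L') in *.
      assert (HL : conv (fun r => In r L) q) by (apply conv_single; simpl; auto).
      destruct (list_bound L) as [B [HB HBL]].
      set (K := vnorm n p + B).
      assert (HK : forall c, conv (fun r => In r L) c -> forall i, Rabs (p i - c i) <= K).
      { intros c Hc i. pose proof (conv_bound _ _ _ HBL Hc i). pose proof (vnorm_ge n p i).
        unfold K. eapply Rle_trans; [apply Rabs_triang|]. rewrite Rabs_Ropp. lra. }
      set (E := fun t d => exists c, conv (fun r => In r L) c /\
                   d = vnorm n (fun i => y i - (t * p i + (1 - t) * c i))).
      set (phi := fun t => rglb (E t)).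
      assert (Hphi : forall t, is_rglb (E t) (phi t)).
      { intros t; apply rglb_spec. exists (vnorm n (fun i => y i - (t * p i + (1 - t) * q i))), q; auto.
        exists 0; intros x [c [_ ->]]; apply vnorm_ge0. }
      assert (Hphi0 : forall t, 0 <= phi t).
      { intros t. apply (proj2 (Hphi t)). intros x [c [_ ->]]; apply vnorm_ge0. }
      assert (Lip : forall t t', phi t <= phi t' + K * Rabs (t - t')).
      { intros t t'. assert (phi t - K * Rabs (t - t') <= phi t'); [|lra].
        apply (proj2 (Hphi t')). intros x [c [Hc ->]].
        assert (phi t <= vnorm n (fun i => y i - (t * p i + (1 - t) * c i))) by (apply (proj1 (Hphi t)); exists c; auto).
        assert (vnorm n (fun i => y i - (t * p i + (1 - t) * c i)) <=
                vnorm n (fun i => y i - (t' * p i + (1 - t') * c i)) + K * Rabs (t - t')).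
        { apply vnorm_le. pose proof (vnorm_ge0 n (fun i => y i - (t' * p i + (1 - t') * c i))).
          pose proof (Rabs_pos (t - t')). assert (0 <= K) by (unfold K; pose proof (vnorm_ge0 n p); lra). nra.
          intros i. replace (y i - (t * p i + (1 - t) * c i)) with
            ((y i - (t' * p i + (1 - t') * c i)) + (t' - t) * (p i - c i)) by ring.
          eapply Rle_trans; [apply Rabs_triang|]. apply Rplus_le_compat.
          apply (vnorm_ge n (fun i => y i - (t' * p i + (1 - t') * c i)) i).
          rewrite Rabs_mult, (Rabs_minus_sym t' t), Rmult_comm.
          apply Rmult_le_compat_r. apply Rabs_pos. apply HK; auto. }
        lra. }
      assert (Cont : forall c, 0 <= c <= 1 -> continuity_pt phi c).
      { intros c _. unfold continuity_pt, continue_in, limit1_in, limit_in. simpl. unfold R_dist.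
        intros eps He. exists (eps / (K + 1)). assert (0 <= K) by (unfold K; pose proof (vnorm_ge0 n p); lra).
        split. apply Rdiv_lt_0_compat; lra.
        intros x [_ Hx]. pose proof (Lip x c) as L1. pose proof (Lip c x) as L2. rewrite Rabs_minus_sym in L2.
        assert (K * Rabs (x - c) < eps).
        { apply Rle_lt_trans with (K * (eps / (K + 1))). apply Rmult_le_compat_l; lra.
          unfold Rdiv. rewrite <- Rmult_assoc. apply Rmult_lt_reg_r with (K + 1). lra.
          rewrite Rmult_assoc, Rinv_l by lra. nra. }
        apply Rabs_def1; lra. }
      destruct (continuity_ab_min phi 0 1 Rle_0_1 Cont) as [ts [Hmin Hts]].
      assert (Hz : phi ts <= 0).
      { apply Rnot_lt_le; intro Hlt. destruct (H _ Hlt) as [c0 [Hc0 Hb]].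
        destruct (conv_cons_rep p L c0 q HL Hc0) as [t [c' [Ht [Hc' Ec]]]].
        assert (phi t <= vnorm n (fun i => y i - (t * p i + (1 - t) * c' i))) by (apply (proj1 (Hphi t)); exists c'; auto).
        assert (vnorm n (fun i => y i - (t * p i + (1 - t) * c' i)) < phi ts).
        { apply vnorm_lt; auto. intros i. specialize (Hb i). rewrite Ec in Hb. unfold vadd, vscale in Hb.
          rewrite Rabs_minus_sym; auto. }
        specialize (Hmin t Ht). lra. }
      assert (Happ : forall eps, 0 < eps -> exists c, conv (fun r => In r L) c /\
                  vnorm n (fun i => y i - (ts * p i + (1 - ts) * c i)) < eps).
      { intros eps He. apply NNPP; intro N. assert (eps <= phi ts); [|specialize (Hphi0 ts); lra].
        apply (proj2 (Hphi ts)). intros x [c [Hc ->]]. apply Rnot_lt_le; intro Hlt. apply N; exists c; auto. }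
      destruct (Req_dec ts 1) as [E1|E1].
      * subst ts. assert (y = p).
        { apply ball_eq. intros eps He. destruct (Happ eps He) as [c [_ Hc]]. intros i.
          pose proof (vnorm_ge n (fun i => y i - (1 * p i + (1 - 1) * c i)) i). simpl in H0.
          rewrite Rabs_minus_sym. replace (y i - p i) with (y i - (1 * p i + (1 - 1) * c i)) by ring. lra. }
        subst; apply conv_single; simpl; auto.
      * set (y' := fun i => / (1 - ts) * (y i - ts * p i)).
        assert (Hy' : conv (fun r => In r L) y').
        { apply IH. intros eps He. destruct (Happ (eps * (1 - ts))) as [c [Hc Hv]]. apply Rmult_lt_0_compat; lra.
          exists c; split; auto. intros i. pose proof (vnorm_ge n (fun i => y i - (ts * p i + (1 - ts) * c i)) i).
          unfold y'. replace (c i - / (1 - ts) * (y i - ts * p i)) with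
             (/ (1 - ts) * - (y i - (ts * p i + (1 - ts) * c i))) by (field; lra).
          rewrite Rabs_mult, Rabs_Ropp, Rabs_pos_eq. apply Rmult_lt_reg_l with (1 - ts). lra.
          rewrite <- Rmult_assoc, Rinv_r by lra. lra. apply Rlt_le, Rinv_0_lt_compat; lra. }
        replace y with (vadd (vscale ts p) (vscale (1 - ts) y')).
        apply conv_convex. apply conv_single; simpl; auto.
        apply (conv_mono (fun r => In r L)); auto. intros r Hr; simpl; auto. lra.
        apply vext; intro i. unfold vadd, vscale, y'. field. lra.
Qed.


Fixpoint ins {n} (f : vec n -> R) (a : vec n * R) (l : list (vec n * R)) :=
  match l with
  | [] => [a]
  | b :: l' => if Rle_dec (f (fst a)) (f (fst b)) then a :: l else b :: ins f a l'
  end.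
Definition isort {n} (f : vec n -> R) l := fold_right (ins f) [] l.

Lemma ins_perm {n} f (a : vec n * R) l : Permutation (a :: l) (ins f a l).
Proof. induction l as [|b l IH]; simpl. auto. destruct Rle_dec. auto.
  eapply perm_trans. apply perm_swap. auto. Qed.
Lemma isort_perm {n} f (l : list (vec n * R)) : Permutation l (isort f l).
Proof. induction l; simpl. auto. eapply perm_trans; [|apply ins_perm]. auto. Qed.

Definition Rf {n} (f : vec n -> R) (a b : vec n * R) := f (fst a) <= f (fst b).

Lemma ins_sorted {n} f (a : vec n * R) l : Sorted (Rf f) l -> Sorted (Rf f) (ins f a l).
Proof. induction 1 as [|b l Hs IH Hh]; simpl. auto.
  destruct Rle_dec as [Hle|Hle]. constructor; auto.
  constructor; auto. destruct l as [|c l]; simpl. constructor; unfold Rf; lra.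
  simpl in IH. inversion Hh; subst. destruct Rle_dec; constructor; unfold Rf in *; lra. Qed.
Lemma isort_sorted {n} f (l : list (vec n * R)) : Sorted (Rf f) (isort f l).
Proof. induction l; simpl; auto. apply ins_sorted; auto. Qed.

Lemma sorted_map_app {n} f (l : list (vec n * R)) x :
  Sorted (Rf f) l -> (forall a, In a l -> f (fst a) <= f x) ->
  Sorted (fun a b => f a <= f b) (map fst l ++ [x]).
Proof. induction 1 as [|b l Hs IH Hh]; intros H; simpl. auto.
  constructor. apply IH; intros; apply H; simpl; auto.
  destruct l as [|c l]; simpl. constructor; apply H; simpl; auto.
  inversion Hh; subst; constructor; auto. Qed.

Lemma lincomb_sub_pt {n} (x : vec n) ps i :
  lincomb (map (fun pl => (vsub x (fst pl), snd pl)) ps) i = wsum ps * x i - lincomb ps i.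
Proof. induction ps as [|[p l] ps IH]; simpl. unfold vzero; lra.
  unfold vadd, vscale, vsub in *; simpl in *. rewrite IH. lra. Qed.

Lemma split_pos {n} (S : vec n -> Prop) ps : Forall (fun pl => S (fst pl) /\ 0 <= snd pl) ps -> wsum ps = 1 ->
  exists ps1 p0 a0 ps2, ps = ps1 ++ (p0, a0) :: ps2 /\ 0 < a0.
Proof. intros H; induction H as [|[p l] ps [Hp Hl] Hr IH]; simpl; intros Hw. lra.
  destruct (Rlt_dec 0 l) as [Hl0|Hl0]. exists [], p, l, ps; auto. apply Rnot_lt_le in Hl0. simpl in Hl.
  destruct IH as [ps1 [p0 [a0 [ps2 [E Ha]]]]]. lra. subst.
  exists ((p,l)::ps1), p0, a0, ps2. auto. Qed.

Lemma KL {n} (D : vec n -> Prop) (f : vec n -> R) (hconic : discretely_conic D f) x a b s :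
  D x -> conv (fun p => D p /\ f p < f x) a -> conv (fun p => D p /\ f p <= f x) b ->
  0 <= s < 1 -> x = vadd (vscale (1 - s) a) (vscale s b) -> False.
Proof.
  intros Dx [ps [Hps [Wp Ea]]] [qs [Hqs [Wq Eb]]] Hs Ex.
  destruct (split_pos (fun p => D p /\ f p < f x) _ Hps Wp) as [ps1 [p0 [a0 [ps2 [E Ha0]]]]].
  assert (Hp0 : D p0 /\ f p0 < f x).
  { subst ps. apply Forall_app in Hps. destruct Hps as [_ H]. inversion H; subst. simpl in *; tauto. }
  set (G := scl (s / ((1 - s) * a0)) qs ++ scl (/ a0) (ps1 ++ ps2)).
  assert (HG : Forall (fun pl => D (fst pl) /\ 0 <= snd pl) G /\ forall pl, In pl G -> f (fst pl) <= f x).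
  { assert (Hps' : Forall (fun pl => (D (fst pl) /\ f (fst pl) <= f x) /\ 0 <= snd pl) (ps1 ++ ps2)).
    { rewrite E in Hps. apply Forall_app in Hps. destruct Hps as [H1 H2]. inversion H2 as [|? ? H3 H4].
      assert (Hw : forall pl, (D (fst pl) /\ f (fst pl) < f x) /\ 0 <= snd pl -> (D (fst pl) /\ f (fst pl) <= f x) /\ 0 <= snd pl).
      { intros pl [[? ?] ?]; repeat split; auto; lra. }
      apply Forall_app; split; eapply Forall_impl; try apply Hw; auto. }
    assert (F : Forall (fun pl => (D (fst pl) /\ f (fst pl) <= f x) /\ 0 <= snd pl) G).
    { unfold G; apply Forall_app; split; apply (Forall_scl (fun p => D p /\ f p <= f x)); auto.
      apply Rmult_le_pos. lra. apply Rlt_le, Rinv_0_lt_compat. apply Rmult_lt_0_compat; lra.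
      apply Rlt_le, Rinv_0_lt_compat; lra. }
    split. eapply Forall_impl; [|exact F]; simpl; tauto.
    intros pl Hin. rewrite Forall_forall in F. apply F; auto. }
  destruct HG as [HG1 HG2].
  apply (Rlt_not_le _ _ (proj2 Hp0)).
  apply (hconic (isort f G) x p0); auto.
  - tauto.
  - rewrite Forall_forall in *. intros pl Hin. apply HG1. apply Permutation_in with (isort f G); auto.
    symmetry; apply isort_perm.
  - apply sorted_map_app. apply isort_sorted. intros pl Hin. apply HG2.
    apply Permutation_in with (isort f G); auto. symmetry; apply isort_perm.
  - apply vext; intro i. unfold vadd. rewrite lincomb_sub_pt.
    rewrite <- (wsum_perm _ _ (isort_perm f G)). rewrite <- (lincomb_perm_pt _ _ i (isort_perm f G)).
    unfold G. rewrite wsum_app, lincomb_app_pt, !wsum_scl, !lincomb_scl_pt.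
    assert (Wps : wsum (ps1 ++ ps2) = 1 - a0).
    { rewrite E in Wp. rewrite wsum_app in *. simpl in Wp. lra. }
    assert (Lps : lincomb (ps1 ++ ps2) i = a i - a0 * p0 i).
    { subst ps a. rewrite !lincomb_app_pt. simpl. unfold vadd, vscale. simpl. lra. }
    rewrite Wps, Wq, Lps. rewrite Ex. rewrite <- Eb. unfold vadd, vscale.
    field. split; lra.
Qed.


Lemma MINU_D {n} (D : vec n -> Prop) f j y : MINU D f j y -> D y.
Proof. induction j; simpl. tauto. intros [H|[H _]]; auto. Qed.

Lemma MINU_mono {n} (D : vec n -> Prop) f j k y : (j <= k)%nat -> MINU D f j y -> MINU D f k y.
Proof. induction 1; auto. intros H0; simpl; left; auto. Qed.

Lemma MINU_lt {n} (D : vec n -> Prop) f j y x : MINU D f j y -> D x -> ~ MINU D f j x -> f y < f x.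
Proof. revert y x; induction j; simpl; intros y x Hy Dx Nx. contradiction.
  destruct Hy as [Hy|[Dy [Ny My]]].
  - apply IHj; auto.
  - assert (~ (forall z, D z -> ~ MINU D f j z -> f x <= f z)) as N. { intro H; apply Nx; right; split; [auto|split; [intro; apply Nx; left; auto|auto]]. }
    apply not_all_ex_not in N. destruct N as [z N].
    destruct (classic (D z)) as [Dz|Dz]; [|exfalso; apply N; intro; contradiction].
    destruct (classic (MINU D f j z)) as [Mz|Mz]; [exfalso; apply N; intros; contradiction|].
    assert (f z < f x) by (apply Rnot_le_lt; intro; apply N; auto).
    specialize (My z Dz Mz). lra. Qed.

Theorem RHS {n} (D : vec n -> Prop) (f : vec n -> R) (hconic : discretely_conic D f) :
  forall i : nat, (2 <= i)%nat -> forall x, MIN D f i x -> relbd (conv (MINU D f i)) x.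
Proof.
  intros i Hi x [Hx Nx]. destruct i as [|j]. lia. simpl in Nx.
  assert (Dx : D x) by (eapply MINU_D; eauto).
  assert (Mx : forall z, D z -> ~ MINU D f j z -> f x <= f z).
  { simpl in Hx. destruct Hx as [H|[_ [_ H]]]; [contradiction|auto]. }
  assert (Ha : exists a0, MINU D f j a0).
  { apply NNPP; intro N. apply Nx. apply (MINU_mono D f 1); [lia|]. simpl. right. repeat split; auto.
    intros y Dy _. apply Mx; auto. intro; apply N; eauto. }
  destruct Ha as [a0 Ha0].
  assert (Ha0x : f a0 < f x) by (eapply MINU_lt; eauto).
  assert (Da0 : D a0) by (eapply MINU_D; eauto).
  assert (Sub : forall y, MINU D f (S j) y -> D y /\ f y <= f x).
  { intros y Hy. split. eapply MINU_D; eauto. simpl in Hy. destruct Hy as [Hy|[Dy [Ny My]]].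
    left; eapply MINU_lt; eauto. apply My; auto. }
  assert (Sa0 : conv (MINU D f (S j)) a0) by (apply conv_single; simpl; left; auto).
  assert (Sx : conv (MINU D f (S j)) x) by (apply conv_single; auto).
  split. exists [(x,1)]. split. constructor; [exact Sx|constructor]. split. simpl; lra.
    apply vext; intro k; simpl; unfold vadd, vscale, vzero; simpl; lra.
  intros eps He. split. exists x; split; auto. intros k. rewrite Rminus_diag, Rabs_R0; auto.
  set (K := vnorm n (fun k => x k - a0 k)).
  assert (HK : 0 <= K) by apply vnorm_ge0.
  set (t := eps / (2 * (K + 1))).
  assert (Ht : 0 < t) by (unfold t; apply Rdiv_lt_0_compat; lra).
  exists (vadd (vscale (1 + t) x) (vscale (- t) a0)). split; [|split].
  - exists [(x, 1 + t); (a0, - t)]. split. repeat constructor; auto. split. simpl; lra.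
    apply vext; intro k; simpl; unfold vadd, vscale, vzero; simpl; lra.
  - intro Hy. apply (KL D f hconic x a0 (vadd (vscale (1 + t) x) (vscale (- t) a0)) (/ (1 + t))); auto.
    + apply conv_single; auto.
    + eapply conv_mono; [|exact Hy]. intros y Hy'; apply Sub; auto.
    + split. apply Rlt_le, Rinv_0_lt_compat; lra. rewrite <- Rinv_1. apply Rinv_lt_contravar; lra.
    + apply vext; intro k; unfold vadd, vscale. field. lra.
  - intros k. unfold vadd, vscale. replace ((1 + t) * x k + - t * a0 k - x k) with (t * (x k - a0 k)) by ring.
    rewrite Rabs_mult, Rabs_pos_eq by lra. pose proof (vnorm_ge n (fun k => x k - a0 k) k). fold K in H.
    apply Rle_lt_trans with (t * K). apply Rmult_le_compat_l; lra.
    unfold t. unfold Rdiv. rewrite Rmult_assoc. apply Rmult_lt_reg_r with (2 * (K + 1)). lra.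
    field_simplify. apply Rmult_lt_reg_r with (2 * (K + 1)). lra. field_simplify. nra. lra.
Qed.


Definition Vv {n} (D : vec n -> Prop) (f : vec n -> R) v := exists p, D p /\ f p = v.
Definition Pc {n} (D : vec n -> Prop) (f : vec n -> R) v := conv (fun p => D p /\ f p <= v).
Definition consec {n} (D : vec n -> Prop) (f : vec n -> R) u w := u <= w /\ forall v, Vv D f v -> ~ (u < v < w).
Definition Mix {n} (A B : vec n -> Prop) s x := exists a b, A a /\ B b /\ x = vadd (vscale (1 - s) a) (vscale s b).
Definition Lay {n} (D : vec n -> Prop) (f : vec n -> R) u w s x :=
  Vv D f u /\ Vv D f w /\ consec D f u w /\ 0 <= s <= 1 /\ Mix (Pc D f u) (Pc D f w) s x.
Definition Tset {n} (D : vec n -> Prop) (f : vec n -> R) x c :=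
  exists u w s, Lay D f u w s x /\ c = (1 - s) * u + s * w.

Lemma Pc_convex {n} D f v : convex (@Pc n D f v).
Proof. apply conv_convex. Qed.
Lemma Pc_mono {n} D f u v x : u <= v -> @Pc n D f u x -> Pc D f v x.
Proof. intros H; apply conv_mono; intros p [? ?]; split; auto; lra. Qed.
Lemma Pc_val {n} D f v : @Vv n D f v -> exists a, Pc D f v a.
Proof. intros [p [Dp Ep]]; exists p; apply conv_single; split; auto; lra. Qed.

Lemma Mix_top {n} (A B : vec n -> Prop) s x : convex B -> (forall y, A y -> B y) -> 0 <= s <= 1 -> Mix A B s x -> B x.
Proof. intros HB HAB Hs [a [b [Ha [Hb E]]]]. subst.
  replace (vadd (vscale (1 - s) a) (vscale s b)) with (vadd (vscale (1 - s) a) (vscale (1 - (1 - s)) b)).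
  apply HB; auto. lra. f_equal; f_equal; ring. Qed.
Lemma Mix_of {n} (A B : vec n -> Prop) s x : A x -> B x -> Mix A B s x.
Proof. intros Ha Hb; exists x, x; repeat split; auto. apply vext; intro i; unfold vadd, vscale; ring. Qed.
Lemma Mix_one {n} (A B : vec n -> Prop) x a : A a -> B x -> Mix A B 1 x.
Proof. intros Ha Hb; exists a, x; repeat split; auto. apply vext; intro i; unfold vadd, vscale; ring. Qed.
Lemma Mix_zero_inv {n} (A B : vec n -> Prop) x : Mix A B 0 x -> A x.
Proof. intros [a [b [Ha [Hb E]]]]. replace x with a; auto. subst; apply vext; intro i; unfold vadd, vscale; ring. Qed.
Lemma Mix_one_inv {n} (A B : vec n -> Prop) x : Mix A B 1 x -> B x.
Proof. intros [a [b [Ha [Hb E]]]]. replace x with b; auto. subst; apply vext; intro i; unfold vadd, vscale; ring. Qed.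

Lemma Mix_up {n} (A B : vec n -> Prop) s s' x : convex B -> (forall y, A y -> B y) -> 0 <= s <= s' -> s' <= 1 ->
  Mix A B s x -> Mix A B s' x.
Proof. intros HB HAB Hs Hs' [a [b [Ha [Hb E]]]].
  destruct (Req_dec s' 0) as [Z|Z].
  - replace s' with s by lra. exists a, b; auto.
  - exists a, (vadd (vscale ((s' - s) / s') a) (vscale (1 - (s' - s) / s') b)). repeat split; auto.
    apply HB; auto. split. apply Rmult_le_pos; [lra|apply Rlt_le, Rinv_0_lt_compat; lra].
    apply Rmult_le_reg_r with s'. lra. unfold Rdiv; rewrite Rmult_assoc, Rinv_l by lra. lra.
    subst; apply vext; intro i; unfold vadd, vscale. field. auto. Qed.

Lemma Mix_comb {n} (A B : vec n -> Prop) s1 s2 l y w : convex A -> convex B -> 0 <= l <= 1 ->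
  0 <= s1 <= 1 -> 0 <= s2 <= 1 -> Mix A B s1 y -> Mix A B s2 w ->
  Mix A B (l * s1 + (1 - l) * s2) (vadd (vscale l y) (vscale (1 - l) w)).
Proof. intros HA HB Hl H1 H2 [a1 [b1 [Ha1 [Hb1 E1]]]] [a2 [b2 [Ha2 [Hb2 E2]]]].
  set (s := l * s1 + (1 - l) * s2).
  assert (Hs : 0 <= s <= 1) by (unfold s; split; nra).
  assert (HaC : s < 1 -> A (vadd (vscale (l * (1 - s1) / (1 - s)) a1) (vscale (1 - l * (1 - s1) / (1 - s)) a2))).
  { intros Hs1. apply HA; auto. split. apply Rmult_le_pos; [nra|apply Rlt_le, Rinv_0_lt_compat; lra].
    apply Rmult_le_reg_r with (1 - s). lra. unfold Rdiv; rewrite Rmult_assoc, Rinv_l by lra. unfold s; nra. }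
  assert (HbC : 0 < s -> B (vadd (vscale (l * s1 / s) b1) (vscale (1 - l * s1 / s) b2))).
  { intros Hs1. apply HB; auto. split. apply Rmult_le_pos; [nra|apply Rlt_le, Rinv_0_lt_compat; lra].
    apply Rmult_le_reg_r with s. lra. unfold Rdiv; rewrite Rmult_assoc, Rinv_l by lra. unfold s; nra. }
  fold s. subst y w.
  destruct (Req_dec s 1) as [S1|S1]; destruct (Req_dec s 0) as [S0|S0].
  - lra.
  -
    exists a1, (vadd (vscale (l * s1 / s) b1) (vscale (1 - l * s1 / s) b2)). repeat split; auto. apply HbC; lra.
    assert (l * (1 - s1) = 0) by (unfold s in S1; nra). assert ((1 - l) * (1 - s2) = 0) by (unfold s in S1; nra).
    apply vext; intro i; unfold vadd, vscale. rewrite S1. apply Rminus_diag_uniq.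
    match goal with |- ?L - ?R = 0 => replace (L - R) with (l * (1 - s1) * (a1 i - b2 i) + (1 - l) * (1 - s2) * (a2 i - b2 i)) by (unfold s in S1; field) end.
    rewrite H, H0; ring.
  - exists (vadd (vscale (l * (1 - s1) / (1 - s)) a1) (vscale (1 - l * (1 - s1) / (1 - s)) a2)), b1.
    repeat split; auto. apply HaC; lra.
    assert (l * s1 = 0) by (unfold s in S0; nra). assert ((1 - l) * s2 = 0) by (unfold s in S0; nra).
    apply vext; intro i; unfold vadd, vscale. rewrite S0. apply Rminus_diag_uniq.
    match goal with |- ?L - ?R = 0 => replace (L - R) with (l * s1 * (b1 i - a2 i) + (1 - l) * s2 * (b2 i - a2 i)) by (unfold s in S0; field) end.
    rewrite H, H0; ring.
  - exists (vadd (vscale (l * (1 - s1) / (1 - s)) a1) (vscale (1 - l * (1 - s1) / (1 - s)) a2)),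
           (vadd (vscale (l * s1 / s) b1) (vscale (1 - l * s1 / s) b2)).
    repeat split; auto. apply HaC; lra. apply HbC; lra.
    apply vext; intro i; unfold vadd, vscale. unfold s in *. field. split; lra.
Qed.


Lemma Lay_top {n} D f u w s x : @Lay n D f u w s x -> Pc D f w x.
Proof. intros [_ [_ [[Huw _] [Hs HM]]]].
  exact (Mix_top (Pc D f u) (Pc D f w) s x (Pc_convex D f w) (fun y => Pc_mono D f u w y Huw) Hs HM). Qed.

Lemma RM {n} D f x c c' u' w' s' :
  @Tset n D f x c -> c <= c' -> Vv D f u' -> Vv D f w' -> consec D f u' w' -> u' < w' -> 0 <= s' <= 1 ->
  c' = (1 - s') * u' + s' * w' -> Mix (Pc D f u') (Pc D f w') s' x.
Proof.
  intros [u [w [s [HL Ec]]]] Hcc Vu' Vw' [_ Cw'] Huw' Hs' Ec'.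
  pose proof (Lay_top _ _ _ _ _ _ HL) as Hxw.
  destruct HL as [Vu [Vw [[Huw Cw] [Hs HM]]]].
  destruct (Pc_val _ _ _ Vu') as [a' Ha'].
  destruct (Rle_dec w u') as [H1|H1].
  { apply Mix_of. eapply Pc_mono; eauto. eapply Pc_mono; [|eauto]. lra. }
  apply Rnot_le_lt in H1.
  destruct (Req_dec u w) as [E|E].
  - subst w. destruct (Rle_dec u w') as [H2|H2].
    + assert (u = w') by (destruct (Rle_lt_or_eq_dec _ _ H2); auto; exfalso; apply (Cw' u Vu); lra).
      subst w'. assert (s' = 1) by nra. subst s'. eapply Mix_one; eauto.
    + exfalso. nra.
  - assert (Hu' : u' <= u) by (apply Rnot_lt_le; intro; apply (Cw u' Vu'); lra).
    destruct (Rle_lt_or_eq_dec _ _ Hu') as [H3|H3].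
    + assert (Hw' : w' <= u) by (apply Rnot_lt_le; intro; apply (Cw' u Vu); lra).
      assert (s = 0) by nra. subst s. apply Mix_zero_inv in HM.
      assert (s' = 1) by nra. subst s'. eapply Mix_one; eauto. apply (Pc_mono D f u); [|exact HM]. nra.
    + subst u'. assert (w' = w).
      { destruct (Rtotal_order w' w) as [H4|[H4|H4]]; auto; exfalso.
        apply (Cw w' Vw'); lra. apply (Cw' w Vw); lra. }
      subst w'. eapply Mix_up; eauto. apply Pc_convex. intros y; apply Pc_mono; lra.
      split. lra. nra. lra.
Qed.

Lemma list_argmax {n} (g : vec n -> R) (P : vec n -> Prop) l :
  (exists p, In p l /\ P p) -> exists q, In q l /\ P q /\ forall r, In r l -> P r -> g r <= g q.
Proof. induction l as [|a l IH]; intros [p [Hp HP]]. destruct Hp.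
  destruct (classic (exists p, In p l /\ P p)) as [H|H].
  - destruct (IH H) as [q [Hq [Pq Mq]]].
    destruct (classic (P a /\ g q < g a)) as [[Pa Ha]|Ha].
    + exists a; split; [simpl; auto|split; auto]. intros r [E|E] Pr. subst; lra. specialize (Mq r E Pr); lra.
    + exists q; split; [simpl; auto|split; auto]. intros r [E|E] Pr; auto. subst.
      apply Rnot_lt_le; intro; apply Ha; auto.
  - destruct Hp as [E|E]; [|exfalso; apply H; eauto]. subst.
    exists p; split; [simpl; auto|split; auto]. intros r [E|E] Pr. subst; lra. exfalso; apply H; eauto.
Qed.

Lemma list_filter_ex {n} (P : vec n -> Prop) (l : list (vec n)) : exists L, forall p, In p L <-> In p l /\ P p.
Proof. induction l as [|a l [L HL]]. exists []; simpl; tauto.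
  destruct (classic (P a)) as [Pa|Pa].
  - exists (a :: L); intros p; simpl; rewrite HL; split. intros [E|E]; subst; tauto. intros [[E|E] Pp]; auto.
  - exists L; intros p; simpl; rewrite HL; split. tauto. intros [[E|E] Pp]; subst; tauto. Qed.

Lemma Pc_list {n} D f (hfin : finite_sublevels D f) u :
  exists L, forall x, @Pc n D f u x <-> conv (fun p => In p L) x.
Proof. destruct (hfin u) as [l Hl]. destruct (list_filter_ex (fun p => D p /\ f p <= u) l) as [L HL].
  exists L; intros x; split; apply conv_mono; intros p Hp. apply HL; split; auto. destruct Hp; auto. apply HL; auto. Qed.

Lemma Mix_closed {n} D f (hfin : finite_sublevels D f) u w sg x :
  Vv D f u -> Vv D f w -> u <= w -> 0 <= sg < 1 ->
  (forall s, sg < s <= 1 -> @Mix n (Pc D f u) (Pc D f w) s x) -> Mix (Pc D f u) (Pc D f w) sg x.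
Proof.
  intros Vu Vw Huw Hsg H.
  destruct (Pc_list D f hfin u) as [Lu HLu]. destruct (Pc_list D f hfin w) as [Lw HLw].
  set (ML := flat_map (fun a => map (fun b => vadd (vscale (1 - sg) a) (vscale sg b)) Lw) Lu).
  set (M := Mix (Pc D f u) (Pc D f w) sg).
  assert (HMc : convex M).
  { intros p q l Hp Hq Hl. pose proof (Mix_comb _ _ sg sg l p q (Pc_convex D f u) (Pc_convex D f w) Hl ltac:(lra) ltac:(lra) Hp Hq) as HH.
    replace (l * sg + (1 - l) * sg) with sg in HH by ring. exact HH. }
  assert (HML : forall y, conv (fun p => In p ML) y -> M y).
  { intros y; apply conv_in_convex; auto. intros z Hz. unfold ML in Hz. apply in_flat_map in Hz.
    destruct Hz as [a [Ha Hz]]. apply in_map_iff in Hz. destruct Hz as [b [Eb Hb]]. subst z.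
    exists a, b; repeat split; auto. apply HLu, conv_single; auto. apply HLw, conv_single; auto. }
  assert (Step1 : forall a b, Pc D f u a -> In b Lw -> conv (fun p => In p ML) (vadd (vscale (1 - sg) a) (vscale sg b))).
  { intros a b Ha Hb. apply HLu in Ha.
    apply (conv_in_convex (fun p => In p Lu) (fun a => conv (fun p => In p ML) (vadd (vscale (1 - sg) a) (vscale sg b)))); auto.
    - intros p q l Hp Hq Hl. replace (vadd (vscale (1 - sg) (vadd (vscale l p) (vscale (1 - l) q))) (vscale sg b))
        with (vadd (vscale l (vadd (vscale (1 - sg) p) (vscale sg b))) (vscale (1 - l) (vadd (vscale (1 - sg) q) (vscale sg b)))).
      apply conv_convex; auto. apply vext; intro i; unfold vadd, vscale; ring.
    - intros a' Ha'. apply conv_single. unfold ML. apply in_flat_map. exists a'; split; auto. apply in_map_iff; eauto. }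
  assert (Step2 : forall a b, Pc D f u a -> Pc D f w b -> conv (fun p => In p ML) (vadd (vscale (1 - sg) a) (vscale sg b))).
  { intros a b Ha Hb. apply HLw in Hb.
    apply (conv_in_convex (fun p => In p Lw) (fun b => conv (fun p => In p ML) (vadd (vscale (1 - sg) a) (vscale sg b)))); auto.
    intros p q l Hp Hq Hl. replace (vadd (vscale (1 - sg) a) (vscale sg (vadd (vscale l p) (vscale (1 - l) q))))
        with (vadd (vscale l (vadd (vscale (1 - sg) a) (vscale sg p))) (vscale (1 - l) (vadd (vscale (1 - sg) a) (vscale sg q)))).
      apply conv_convex; auto. apply vext; intro i; unfold vadd, vscale; ring. }
  apply HML. apply conv_list_closed.
  destruct (list_bound (Lu ++ Lw)) as [B [HB HBL]].
  assert (Bd : forall y, (Pc D f u y \/ Pc D f w y) -> forall i, Rabs (y i) <= B).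
  { intros y [Hy|Hy]; [apply HLu in Hy|apply HLw in Hy]; intros i; eapply conv_bound; try exact Hy;
    intros q Hq; apply HBL; apply in_or_app; auto. }
  intros eps He.
  set (s := Rmin 1 (sg + eps / (2 * (2 * B + 1)))).
  assert (Hs : sg < s <= 1).
  { unfold s. split. apply Rmin_glb_lt. lra. assert (0 < eps / (2 * (2 * B + 1))) by (apply Rdiv_lt_0_compat; lra). lra.
    apply Rmin_l. }
  destruct (H s Hs) as [a [b [Ha [Hb Ex]]]].
  exists (vadd (vscale (1 - sg) a) (vscale sg b)). split. apply Step2; auto.
  intros i. subst x. unfold vadd, vscale.
  replace ((1 - sg) * a i + sg * b i - ((1 - s) * a i + s * b i)) with ((s - sg) * (a i - b i)) by ring.
  rewrite Rabs_mult, Rabs_pos_eq by lra.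
  assert (Rabs (a i - b i) <= 2 * B).
  { unfold Rminus; eapply Rle_trans; [apply Rabs_triang|]. rewrite Rabs_Ropp. pose proof (Bd a (or_introl Ha) i). pose proof (Bd b (or_intror Hb) i). lra. }
  assert (s - sg <= eps / (2 * (2 * B + 1))). { unfold s. pose proof (Rmin_r 1 (sg + eps / (2 * (2 * B + 1)))). lra. }
  apply Rle_lt_trans with (eps / (2 * (2 * B + 1)) * (2 * B)).
  apply Rmult_le_compat; try lra. apply Rabs_pos.
  unfold Rdiv. rewrite Rmult_assoc. apply Rmult_lt_reg_r with (2 * (2 * B + 1)). lra.
  field_simplify; try lra. nra.
Qed.


Lemma val_max {n} D f (hfin : finite_sublevels D f) (Q : R -> Prop) beta :
  (forall v, Q v -> v <= beta) -> (exists v, @Vv n D f v /\ Q v) ->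
  exists u, Vv D f u /\ Q u /\ forall v, Vv D f v -> Q v -> v <= u.
Proof. intros HQ [v [[p [Dp Ep]] Qv]]. destruct (hfin beta) as [l Hl].
  destruct (list_argmax f (fun p => D p /\ Q (f p)) l) as [q [Hq [[Dq Qq] Mq]]].
  exists p; split; [apply Hl; auto; subst; auto|subst; auto].
  exists (f q); split. exists q; auto. split; auto. intros v' [p' [Dp' Ep']] Qv'. subst.
  apply Mq; auto. Qed.

Lemma val_min {n} D f (hfin : finite_sublevels D f) (Q : R -> Prop) :
  (exists v, @Vv n D f v /\ Q v) ->
  exists w, Vv D f w /\ Q w /\ forall v, Vv D f v -> Q v -> w <= v.
Proof. intros [v [[p [Dp Ep]] Qv]]. destruct (hfin v) as [l Hl].
  destruct (list_argmax (fun x => - f x) (fun p => D p /\ Q (f p) /\ f p <= v) l) as [q [Hq [[Dq [Qq Lq]] Mq]]].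
  exists p; split; [apply Hl; auto; lra|subst; repeat split; auto; lra].
  exists (f q); split. exists q; auto. split; auto. intros v' [p' [Dp' Ep']] Qv'. subst.
  destruct (Rle_dec (f p') (f p)). assert (- f p' <= - f q) by (apply Mq; auto). lra. lra. Qed.

Lemma T_bounds {n} D f x c : @Tset n D f x c ->
  exists u w s, Vv D f u /\ Vv D f w /\ u <= c <= w /\ Lay D f u w s x /\ c = (1 - s) * u + s * w.
Proof. intros [u [w [s [HL Ec]]]]. exists u, w, s. pose proof HL as [Vu [Vw [[Huw _] [Hs _]]]].
  refine (conj Vu (conj Vw (conj _ (conj HL Ec)))). subst; split; nra. Qed.

Definition gfun {n} (D : vec n -> Prop) (f : vec n -> R) x := rglb (Tset D f x).

Lemma T_ne {n} D f x : conv D x -> exists c, @Tset n D f x c.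
Proof. intros Hx. pose proof Hx as [ps [H1 [H2 H3]]].
  destruct ps as [|[p0 l0] ps0]. simpl in H2; lra.
  destruct (list_argmax f D (map fst ((p0, l0) :: ps0))) as [q [Hq [Dq Mq]]].
  { exists p0; split. simpl; auto. inversion H1; simpl in *; tauto. }
  assert (Hxq : Pc D f (f q) x).
  { exists ((p0, l0) :: ps0); split; auto. rewrite Forall_forall in *. intros pl Hin.
    destruct (H1 pl Hin) as [Dp Hl]. repeat split; auto. apply Mq; auto. apply in_map; auto. }
  exists (f q), (f q), (f q), 0. split; [|ring]. refine (conj _ (conj _ (conj _ (conj _ _)))).
  exists q; auto. exists q; auto. split; [lra| intros v _ Hv; lra]. lra. apply Mix_of; auto. Qed.

Lemma V_lb {n} D f (hfin : finite_sublevels D f) p0 : D p0 -> exists b, forall v, @Vv n D f v -> b <= v.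
Proof. intros Dp0. destruct (val_min D f hfin (fun v => True)) as [w [_ [_ Hw]]].
  exists (f p0); split; auto. exists p0; auto. exists w; intros v Hv; auto. Qed.

Lemma gspec {n} D f (hfin : finite_sublevels D f) x : conv D x -> is_rglb (@Tset n D f x) (gfun D f x).
Proof. intros Hx. apply rglb_spec. apply T_ne; auto.
  destruct Hx as [ps [H1 [H2 H3]]]. destruct ps as [|[p0 l0] ps0]. simpl in H2; lra.
  inversion H1 as [|? ? [Dp0 _] _]. simpl in Dp0.
  destruct (V_lb D f hfin p0 Dp0) as [b Hb]. exists b. intros c Hc.
  destruct (T_bounds _ _ _ _ Hc) as [u [w [s [Vu [Vw [Hc' _]]]]]]. specialize (Hb u Vu). lra. Qed.

Lemma glb_lt {n} D f (hfin : finite_sublevels D f) x y : conv D x -> gfun D f x < y -> exists c, @Tset n D f x c /\ c < y.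
Proof. intros Hx Hy. apply NNPP; intro N. assert (y <= gfun D f x); [|lra].
  apply (proj2 (gspec D f hfin x Hx)). intros c Hc. apply Rnot_lt_le; intro; apply N; eauto. Qed.

Lemma attain {n} D f (hfin : finite_sublevels D f) x : conv D x -> @Tset n D f x (gfun D f x).
Proof.
  intros Hx. set (g := gfun D f x). destruct (classic (Tset D f x g)) as [H|H]; auto.
  pose proof (gspec D f hfin x Hx) as [Glb1 Glb2]. fold g in Glb1, Glb2.
  destruct (T_ne D f x Hx) as [c0 Hc0].
  assert (Hc0g : g < c0) by (destruct (Glb1 _ Hc0); auto; subst; contradiction).
  destruct (T_bounds _ _ _ _ Hc0) as [u0 [w0 [s0 [Vu0 [Vw0 [Hb0 _]]]]]].
  destruct (val_min D f hfin (fun v => g < v)) as [w [Vw [Hgw Mw]]]. exists w0; split; auto; lra.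
  destruct (glb_lt D f hfin x w Hx Hgw) as [c1 [Hc1 Hc1w]].
  destruct (T_bounds _ _ _ _ Hc1) as [u1 [w1 [s1 [Vu1 [Vw1 [Hb1 _]]]]]].
  assert (Hu1 : u1 <= g) by (apply Rnot_lt_le; intro; specialize (Mw u1 Vu1 H0); lra).
  destruct (val_max D f hfin (fun v => v <= g) g) as [u [Vu [Hug Mu]]]; auto. exists u1; auto.
  assert (Cuw : consec D f u w).
  { split. lra. intros v Vv0 [H1 H2]. destruct (Rle_dec v g). specialize (Mu v Vv0 r); lra. specialize (Mw v Vv0 ltac:(lra)); lra. }
  set (sg := (g - u) / (w - u)).
  assert (Hsg : 0 <= sg < 1).
  { unfold sg; split. apply Rmult_le_pos; [lra|apply Rlt_le, Rinv_0_lt_compat; lra].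
    apply Rmult_lt_reg_r with (w - u). lra. unfold Rdiv; rewrite Rmult_assoc, Rinv_l by lra. lra. }
  assert (Eg : g = (1 - sg) * u + sg * w) by (unfold sg; field; lra).
  exfalso; apply H. exists u, w, sg. refine (conj (conj Vu (conj Vw (conj Cuw (conj _ _)))) Eg). lra.
  apply (Mix_closed D f hfin u w sg x Vu Vw ltac:(lra) Hsg).
  intros s Hs. assert (0 < (s - sg) * (w - u)) by (apply Rmult_lt_0_compat; lra).
  assert ((1 - s) * u + s * w - g = (s - sg) * (w - u)) by (rewrite Eg; ring).
  destruct (glb_lt D f hfin x ((1 - s) * u + s * w) Hx ltac:(fold g; lra)) as [c [Hc Hcl]].
  apply (RM D f x c ((1 - s) * u + s * w) u w s); auto; try lra.
Qed.

Lemma g_eq_f {n} D f (hconic : discretely_conic D f) (hfin : finite_sublevels D f) x : D x -> @gfun n D f x = f x.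
Proof.
  intros Dx. assert (Hx : conv D x) by (apply conv_single; auto).
  pose proof (gspec D f hfin x Hx) as [G1 G2].
  assert (Pfx : Pc D f (f x) x) by (apply conv_single; split; auto; lra).
  assert (Tf : Tset D f x (f x)).
  { exists (f x), (f x), 0. split; [|ring]. refine (conj _ (conj _ (conj _ (conj _ _)))).
    exists x; auto. exists x; auto. split; [lra| intros v _ Hv; lra]. lra. apply Mix_of; auto. }
  assert (Lb : forall c, Tset D f x c -> f x <= c).
  { intros c [u [w [s [[Vu [Vw [[Huw Cw] [Hs [a [b [Ha [Hb Ex]]]]]]]] Ec]]]].
    destruct (Rle_dec (f x) u) as [H1|H1]. subst c; nra.
    apply Rnot_le_lt in H1.
    assert (Ha' : conv (fun p => D p /\ f p < f x) a).
    { eapply conv_mono; [|exact Ha]. intros p [? ?]; split; auto; lra. }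
    destruct (Req_dec s 1) as [S1|S1].
    - subst s. destruct (Rle_dec (f x) w) as [H2|H2]. subst c; lra.
      exfalso. assert (Exb : x = b) by (rewrite Ex; apply vext; intro i; unfold vadd, vscale; ring).
      refine (KL D f hconic x x x 0 Dx _ _ _ _).
      + apply Rnot_le_lt in H2. cut (conv (fun p => D p /\ f p < f x) b); [rewrite <- Exb; auto|]. eapply conv_mono; [|exact Hb]. intros p [? ?]; split; auto; lra.
      + apply conv_single; split; auto; lra.
      + lra.
      + apply vext; intro i. unfold vadd, vscale. ring.
    - exfalso. destruct (Rle_dec w (f x)) as [H2|H2].
      + apply (KL D f hconic x a b s); auto. eapply conv_mono; [|exact Hb]. intros p [? ?]; split; auto; lra. lra.
      + apply (Cw (f x)). exists x; auto. lra. }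
  apply Rle_antisym. apply G1; auto. apply G2; auto.
Qed.

Lemma g_conic {n} D f (hfin : finite_sublevels D f) : conic (conv D) (@gfun n D f).
Proof.
  intros y z t Hy Hz Ht Hyz Hw.
  set (w := vadd z (vscale t (vsub z y))) in *.
  apply Rnot_lt_le; intro Hlt. set (gm := gfun D f z) in *.
  destruct (Req_dec t 0) as [T0|T0].
  { assert (w = z). { unfold w; apply vext; intro i; unfold vadd, vscale, vsub; rewrite T0; ring. }
    unfold gm in Hlt; rewrite H in Hlt; lra. }
  destruct (glb_lt D f hfin w gm Hw Hlt) as [cw [Hcw Hcwl]].
  destruct (T_bounds _ _ _ _ Hcw) as [uw [ww [sw [Vuw [Vww [Hbw _]]]]]].
  destruct (val_max D f hfin (fun v => v < gm) gm) as [u [Vu [Hug Mu]]]. intros; lra. exists uw; split; auto; lra.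
  destruct (T_ne D f z Hz) as [cz Hcz].
  pose proof (gspec D f hfin z Hz) as [Gz1 Gz2].
  destruct (T_bounds _ _ _ _ Hcz) as [uz [wz [sz [Vuz [Vwz [Hbz _]]]]]].
  assert (gm <= cz) by (apply Gz1; auto).
  destruct (val_min D f hfin (fun v => gm <= v)) as [w0 [Vw0 [Hgw0 Mw0]]]. exists wz; split; auto; lra.
  assert (Cuw : consec D f u w0).
  { split. lra. intros v Vv0 [H1 H2]. destruct (Rlt_dec v gm). specialize (Mu v Vv0 r); lra.
    specialize (Mw0 v Vv0 ltac:(lra)); lra. }
  set (sg := (gm - u) / (w0 - u)).
  assert (Hsg : 0 < sg <= 1).
  { unfold sg; split. apply Rmult_lt_0_compat; [lra|apply Rinv_0_lt_compat; lra].
    apply Rmult_le_reg_r with (w0 - u). lra. unfold Rdiv; rewrite Rmult_assoc, Rinv_l by lra. lra. }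
  assert (Eg : gm = (1 - sg) * u + sg * w0) by (unfold sg; field; lra).
  assert (My : Mix (Pc D f u) (Pc D f w0) sg y).
  { apply (RM D f y (gfun D f y) gm u w0 sg); auto; try lra. apply attain; auto. }
  set (c2 := Rmax cw u).
  set (s2 := (c2 - u) / (w0 - u)).
  assert (Hc2 : u <= c2 < gm) by (unfold c2; split; [apply Rmax_r|apply Rmax_lub_lt; lra]).
  assert (Hs2 : 0 <= s2 < sg).
  { unfold s2, sg; split. apply Rmult_le_pos; [lra|apply Rlt_le, Rinv_0_lt_compat; lra].
    unfold Rdiv. apply Rmult_lt_compat_r. apply Rinv_0_lt_compat; lra. lra. }
  assert (Mw : Mix (Pc D f u) (Pc D f w0) s2 w).
  { apply (RM D f w cw c2 u w0 s2); auto; try lra. unfold c2; apply Rmax_l. unfold s2; field; lra. }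
  set (lam := / (1 + t)).
  assert (Hlam : 0 < lam < 1).
  { unfold lam; split. apply Rinv_0_lt_compat; lra. rewrite <- Rinv_1. apply Rinv_lt_contravar; lra. }
  assert (Ez : z = vadd (vscale lam w) (vscale (1 - lam) y)).
  { unfold w, lam; apply vext; intro i; unfold vadd, vscale, vsub. field. lra. }
  pose proof (Mix_comb _ _ s2 sg lam w y (Pc_convex D f u) (Pc_convex D f w0) ltac:(lra) ltac:(lra) ltac:(lra) Mw My) as Mz.
  rewrite <- Ez in Mz.
  set (s3 := lam * s2 + (1 - lam) * sg) in *.
  assert (Hs3 : 0 <= s3 < sg) by (unfold s3; split; nra).
  assert (Tz : Tset D f z ((1 - s3) * u + s3 * w0)).
  { exists u, w0, s3. refine (conj (conj Vu (conj Vw0 (conj Cuw (conj _ Mz)))) eq_refl). lra. }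
  apply Gz1 in Tz. assert ((1 - sg) * u + sg * w0 - ((1 - s3) * u + s3 * w0) = (sg - s3) * (w0 - u)) by ring.
  assert (0 < (sg - s3) * (w0 - u)) by (apply Rmult_lt_0_compat; lra). fold gm in Tz. lra.
Qed.


Theorem mainTheorem5 (n : nat) (D : vec n -> Prop) (f : vec n -> R)
  (hdisc : discrete D) (hconic : discretely_conic D f)
  (hfin : finite_sublevels D f) :
  (exists g : vec n -> R, conic (conv D) g /\ forall x, D x -> g x = f x)
  <->
  (forall i : nat, (2 <= i)%nat ->
     forall x, MIN D f i x -> relbd (conv (MINU D f i)) x).
Proof.
  split; intros _.
  - apply RHS; auto.
  - exists (gfun D f). split. apply g_conic; auto. intros x Dx; apply g_eq_f; auto.
Qed.
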